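(* Let $\varepsilon\in(0,1]$, $L\in[0,\infty)$, $q\in(1,\infty)$, let $b\in[1,\infty)$ satisfy $\max\{1,2L\}=\varepsilon b^{q-1}$, let $K\in\mathbb N\cap[\frac{2Lb}{\varepsilon},\frac{2Lb}{\varepsilon}+1]$, let $f\colon\mathbb R\to\mathbb R$ satisfy $|f(x)-f(y)|\le L|x-y|$ for all $x,y\in\mathbb R$, let $\mathfrak x_k=-b+\frac{2kb}{K}$ and $c_k=\frac{K(f(\mathfrak x_{\min\{k+1,K\}})-2f(\mathfrak x_k)+f(\mathfrak x_{\max\{k-1,0\}}))}{2b}$ for $k\in\{0,\dots,K\}$, let $\mathbf F=\mathbf A_{1,f(\mathfrak x_0)}\bullet\bigl(\bigoplus_{k=0}^K(c_k\circledast(\mathfrak i_1\bullet\mathbf A_{1,-\mathfrak x_k}))\bigr)$, and let $\mathfrak r(x)=\max\{x,0\}$. Then (i) $|(\mathcal R_{\mathfrak r}(\mathbf F))(x)-(\mathcal R_{\mathfrak r}(\mathbf F))(y)|\le L|x-y|$ for all $x,y\in\mathbb R$; (ii) $\sup_{x\in[-b,b]}|(\mathcal R_{\mathfrak r}(\mathbf F))(x)-f(x)|\le\frac{2Lb}{K}\le\varepsilon$; (iii) $|(\mathcal R_{\mathfrak r}(\mathbf F))(x)-f(x)|\le\varepsilon\max\{1,|x|^q\}$ for all $x\in\mathbb R$; (iv) $\mathbb D_1(\mathbf F)\le2(\max\{1,2L\})^{q/(q-1)}\varepsilon^{-q/(q-1)}+1$; and (v) $\mathcal P(\mathbf F)=3\mathbb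 D_1(\mathbf F)+1\le12(\max\{1,2L\})^{q/(q-1)}\varepsilon^{-q/(q-1)}$.
   Context: Artificial neural networks (ANNs). Let $\mathbb N=\{1,2,\dots\}$ and $\mathbf N=\bigcup_{L\in\mathbb N}\bigcup_{l_0,\dots,l_L\in\mathbb N}\prod_{k=1}^L(\mathbb R^{l_k\times l_{k-1}}\times\mathbb R^{l_k})$. For $\Phi=((W_1,B_1),\dots,(W_L,B_L))$ in the $(l_0,\dots,l_L)$ component, $\mathcal P(\Phi)=\sum_{k=1}^Ll_k(l_{k-1}+1)$, $\mathcal L(\Phi)=L$, $\mathcal I(\Phi)=l_0$, $\mathcal O(\Phi)=l_L$, $\mathbb D_1(\Phi)=l_1$. For $a\in C(\mathbb R,\mathbb R)$ the realization is $(\mathcal R_a(\Phi))(x_0)=W_Lx_{L-1}+B_L$ with $x_k=\mathfrak M_{a,l_k}(W_kx_{k-1}+B_k)$, $k=1,\dots,L-1$, $\mathfrak M_{a,m}$ applying $a$ componentwise. $\operatorname I_n$ is the identity matrix; $\mathbf A_{W,B}=((W,B))$ (for reals $w,b$, $\mathbf A_{w,b}$ has $1\times1$ weight $w$ and bias $b$). Composition: for $\Phi_1=((W_1,B_1),\dots,(W_L,B_L))$, $\Phi_2=((\mathscr W_1,\mathscr B_1),\dots,(\mathscr W_{\mathfrak L},\mathscr B_{\mathfrak L}))$ with $\mathcal I(\Phi_1)=\mathcal O(\Phi_2)$, $\Phi_1\bullet\Phi_2=((\mathscr W_1,\mathscr B_1),\dots,(\mathscr W_{\mathfrak L-1},\mathscr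 B_{\mathfrak L-1}),(W_1\mathscr W_{\mathfrak L},W_1\mathscr B_{\mathfrak L}+B_1),(W_2,B_2),\dots,(W_L,B_L))$. $\lambda\circledast\Phi=\mathbf A_{\lambda\operatorname I_{\mathcal O(\Phi)},0}\bullet\Phi$. $\mathbf P_n(\Phi_1,\dots,\Phi_n)$ (equal lengths) has $k$-th layer $(\operatorname{diag}(W_{1,k},\dots,W_{n,k}),(B_{1,k},\dots,B_{n,k}))$. $\mathfrak S_{m,n}=\mathbf A_{(\operatorname I_m\cdots\operatorname I_m),0}$, $\mathfrak T_{m,n}=\mathbf A_{(\operatorname I_m\cdots\operatorname I_m)^\top,0}$ ($n$ blocks). For $\Phi_u,\dots,\Phi_v$ with equal $\mathcal L,\mathcal I,\mathcal O$: $\bigoplus_{k=u}^v\Phi_k=\mathfrak S_{\mathcal O(\Phi_u),v-u+1}\bullet([\mathbf P_{v-u+1}(\Phi_u,\dots,\Phi_v)]\bullet\mathfrak T_{\mathcal I(\Phi_u),v-u+1})$. $\mathfrak i_n=((\operatorname I_n,0),(\operatorname I_n,0))$. *)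

(* Defs.v *)
From HB Require Import structures.
From mathcomp Require Import all_boot all_order all_algebra.
From mathcomp Require Import all_classical all_reals all_analysis.
Set Implicit Arguments. Unset Strict Implicit. Unset Printing Implicit Defensive.
Import Order.TTheory GRing.Theory Num.Theory.
Local Open Scope ring_scope.

(* A layer (W_k, B_k) in R^{l_k x l_{k-1}} x R^{l_k} is stored together with  *)
(* its dimensions l_k (lout) and l_{k-1} (lin).  An ANN                       *)
(* Phi = ((W_1,B_1),...,(W_L,B_L)) is the list of its layers, first layer     *)
(* first.  Elements of the set N are exactly the lists satisfying [is_ann].   *)

Record layer (R : Type) := Layer {
  lout : nat; lin : nat; lW : 'M[R]_(lout, lin); lB : 'cV[R]_lout }.
Arguments Layer {R} lout lin lW lB.

Definition ann (R : Type) := seq (layer R).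

Fixpoint dims_match (R : Type) (l : layer R) (s : seq (layer R)) : bool :=
  match s with [::] => true | l' :: s' => (lin l' == lout l) && dims_match l' s' end.

Definition is_ann (R : Type) (Phi : ann R) : bool :=
  match Phi with [::] => false | l :: s => dims_match l s end.

Section ANN.
Variable R : pzRingType.
Implicit Types (Phi : ann R).

Definition ldef : layer R := Layer 0 0 0 0.

Definition annP Phi : nat := \sum_(l <- Phi) lout l * (lin l + 1).
Definition annL Phi : nat := size Phi.
Definition annI Phi : nat := lin (head ldef Phi).
Definition annO Phi : nat := lout (last ldef Phi).
Definition annD1 Phi : nat := lout (head ldef Phi).

Definition dmul r c c' d (A : 'M[R]_(r, c)) (B : 'M[R]_(c', d)) : 'M[R]_(r, d) :=
  match c' =P c with ReflectT e => A *m castmx (e, erefl d) B | ReflectF _ => 0 end.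

Definition aff (l : layer R) m (v : 'cV[R]_m) : 'cV[R]_(lout l) :=
  match m =P lin l with
  | ReflectT e => lW l *m castmx (e, erefl 1%N) v + lB l
  | ReflectF _ => 0 end.

(* Realization R_a(Phi) : R^{I(Phi)} -> R^{O(Phi)}, on dimension-tagged vectors *)
Fixpoint realize_rec (a : R -> R) Phi m (v : 'cV[R]_m) : {n : nat & 'cV[R]_n} :=
  match Phi with
  | [::] => existT _ m v
  | [:: l] => existT _ (lout l) (aff l v)
  | l :: Phi' => realize_rec a Phi' (map_mx a (aff l v))
  end.

Definition vhead (x : {n : nat & 'cV[R]_n}) : R :=
  match x with existT n v =>
    match n return 'cV[R]_n -> R with 0 => fun _ => 0 | n'.+1 => fun v => v ord0 ord0 end v
  end.

Definition realize1 (a : R -> R) Phi (x : R) : R :=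
  vhead (realize_rec a Phi (const_mx x : 'cV[R]_1)).

Definition affA m n (W : 'M[R]_(n, m)) (B : 'cV[R]_n) : ann R := [:: Layer n m W B].
Definition affA1 (w b : R) : ann R := affA (w%:M : 'M[R]_1) (b%:M : 'cV[R]_1).

Definition merge (l1 lL : layer R) : layer R :=
  Layer (lout l1) (lin lL) (dmul (lW l1) (lW lL)) (dmul (lW l1) (lB lL) + lB l1).

Definition comp Phi1 Phi2 : ann R :=
  match Phi1, rev Phi2 with
  | l1 :: Phi1', lL :: rPhi2' => rev rPhi2' ++ merge l1 lL :: Phi1'
  | _, _ => [::]
  end.

Definition scal (lambda : R) Phi : ann R :=
  comp (affA (lambda%:M : 'M[R]_(annO Phi)) (0 : 'cV[R]_(annO Phi))) Phi.

Definition idnet n : ann R :=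
  [:: Layer n n (1%:M) 0; Layer n n (1%:M) 0].

(* parallelization P_n(Phi_1,...,Phi_n) (equal lengths):
   k-th layer = (diag(W_{1,k},...,W_{n,k}), (B_{1,k},...,B_{n,k})) *)
Definition ldiag (l l' : layer R) : layer R :=
  Layer (lout l + lout l') (lin l + lin l')
    (block_mx (lW l) 0 0 (lW l')) (col_mx (lB l) (lB l')).

Definition par (Phis : seq (ann R)) : ann R :=
  [seq foldr ldiag ldef [seq nth ldef Phi k | Phi <- Phis]
  | k <- iota 0 (size (head [::] Phis))].

(* S_{m,n} = A_{(I_m ... I_m), 0} and T_{m,n} = A_{(I_m ... I_m)^T, 0}, n blocks *)
Definition sumS m n : ann R :=
  affA (\matrix_(i < m, j < n * m) (((j %% m)%N == i)%:R) : 'M[R]_(m, n * m)) 0.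
Definition sumT m n : ann R :=
  affA (\matrix_(i < n * m, j < m) (((i %% m)%N == j)%:R) : 'M[R]_(n * m, m)) 0.

Definition dsum (u v : nat) (Phi : nat -> ann R) : ann R :=
  comp (sumS (annO (Phi u)) (v - u + 1))
    (comp (par [seq Phi k | k <- iota u (v - u + 1)]) (sumT (annI (Phi u)) (v - u + 1))).

End ANN.

Definition relu (R : realType) (x : R) : R := Num.max x 0.

Definition gridx (R : realType) (b : R) (K k : nat) : R :=
  - b + 2 * k%:R * b / K%:R.

Definition coefc (R : realType) (f : R -> R) (b : R) (K k : nat) : R :=
  K%:R * (f (gridx b K (minn k.+1 K)) - 2 * f (gridx b K k) + f (gridx b K k.-1))
  / (2 * b).

Definition Fnet (R : realType) (f : R -> R) (b : R) (K : nat) : ann R :=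
  comp (affA1 1 (f (gridx b K 0)))
    (dsum 0 K (fun k => scal (coefc f b K k) (comp (idnet R 1) (affA1 1 (- gridx b K k))))).

(* Main.v *)
Require Import Defs.
From HB Require Import structures.
From mathcomp Require Import all_boot all_order all_algebra.
From mathcomp Require Import all_classical all_reals all_analysis.
From mathcomp Require Import zify ring lra.
Import Order.TTheory GRing.Theory Num.Theory.
Local Open Scope ring_scope.
Set Implicit Arguments. Unset Strict Implicit. Unset Printing Implicit Defensive.

Section Ent.
Variable R : realType.

Definition ent m n (A : 'M[R]_(m, n)) (i j : nat) : R :=
  if insub i : option 'I_m is Some i' then
    if insub j : option 'I_n is Some j' then A i' j' else 0 else 0.

Lemma ent_ord m n (A : 'M[R]_(m, n)) (i : 'I_m) (j : 'I_n) : ent A i j = A i j.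
Proof. by rewrite /ent !valK. Qed.

Lemma ent_out m n (A : 'M[R]_(m, n)) i j : ~~ ((i < m)%N && (j < n)%N) -> ent A i j = 0.
Proof.
rewrite negb_and /ent => /orP[H|H].
  by rewrite insubF // (negbTE H).
by case: insubP => [i' _ _|//]; rewrite insubF // (negbTE H).
Qed.

Lemma ent_cast m n m' n' (e : (m = m') * (n = n')) (A : 'M[R]_(m, n)) i j :
  ent (castmx e A) i j = ent A i j.
Proof. by case: e => e1 e2; destruct e1, e2; rewrite castmx_id. Qed.

Lemma ent0 m n i j : ent (0 : 'M[R]_(m, n)) i j = 0.
Proof.
case H: ((i < m)%N && (j < n)%N); last by rewrite ent_out ?H.
by case/andP: H => Hi Hj; rewrite -[i]/(nat_of_ord (Ordinal Hi)) -[j]/(nat_of_ord (Ordinal Hj)) ent_ord mxE.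
Qed.

Lemma ent_gen m n (A : 'M[R]_(m, n)) (F : nat -> nat -> R) :
  (forall (i : 'I_m) (j : 'I_n), A i j = F i j) ->
  forall i j, ent A i j = if (i < m)%N && (j < n)%N then F i j else 0.
Proof.
move=> HA i j; case H: ((i < m)%N && (j < n)%N); last by rewrite ent_out ?H.
by case/andP: H => Hi Hj; rewrite -[i]/(nat_of_ord (Ordinal Hi)) -[j]/(nat_of_ord (Ordinal Hj)) ent_ord HA.
Qed.

Lemma entD m n (A B : 'M[R]_(m, n)) i j : ent (A + B) i j = ent A i j + ent B i j.
Proof.
case H: ((i < m)%N && (j < n)%N); last by rewrite !ent_out ?H ?addr0.
by case/andP: H => Hi Hj; rewrite -[i]/(nat_of_ord (Ordinal Hi)) -[j]/(nat_of_ord (Ordinal Hj)) !ent_ord mxE.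
Qed.

Lemma entM m c d (A : 'M[R]_(m, c)) (B : 'M[R]_(c, d)) i j :
  ent (A *m B) i j = \sum_(k < c) ent A i k * ent B k j.
Proof.
case H: ((i < m)%N && (j < d)%N); last first.
  rewrite ent_out ?H // big1 // => k _.
  case/nandP: (negbT H) => H'.
    by rewrite [ent A _ _]ent_out ?mul0r // (negbTE H').
  by rewrite [ent B _ _]ent_out ?mulr0 // (negbTE H') andbF.
case/andP: H => Hi Hj; rewrite -[i]/(nat_of_ord (Ordinal Hi)) -[j]/(nat_of_ord (Ordinal Hj)) !ent_ord mxE.
by apply: eq_bigr => k _; rewrite !ent_ord.
Qed.

Lemma ent_map (a : R -> R) m n (A : 'M[R]_(m, n)) i j : a 0 = 0 ->
  ent (map_mx a A) i j = a (ent A i j).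
Proof.
move=> a0; case H: ((i < m)%N && (j < n)%N); last by rewrite !ent_out ?H.
by case/andP: H => Hi Hj; rewrite -[i]/(nat_of_ord (Ordinal Hi)) -[j]/(nat_of_ord (Ordinal Hj)) !ent_ord mxE.
Qed.

Lemma ent_scalar (x : R) : ent (x%:M : 'M[R]_1) 0 0 = x.
Proof. by rewrite -[0%N]/(nat_of_ord (@ord0 0)) ent_ord mxE. Qed.

Lemma ent_const (x : R) m n i j : ent (const_mx x : 'M[R]_(m, n)) i j = if (i < m)%N && (j < n)%N then x else 0.
Proof. by apply: ent_gen => ? ?; rewrite mxE. Qed.

Lemma ent_block m1 m2 n1 n2 (A : 'M[R]_(m1, n1)) (B : 'M[R]_(m1, n2))
   (C : 'M[R]_(m2, n1)) (D : 'M[R]_(m2, n2)) i j :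
  ent (block_mx A B C D) i j =
  if (i < m1)%N then (if (j < n1)%N then ent A i j else ent B i (j - n1))
  else (if (j < n1)%N then ent C (i - m1) j else ent D (i - m1) (j - n1)).
Proof.
case H: ((i < m1 + m2)%N && (j < n1 + n2)%N); last first.
  rewrite ent_out ?H //; case/nandP: (negbT H); rewrite -leqNgt => H'.
    have -> : (i < m1)%N = false by apply/negbTE; rewrite -leqNgt; exact: leq_trans (leq_addr _ _) H'.
    have Hi2 : (i - m1 < m2)%N = false.
      by apply/negbTE; rewrite -leqNgt leq_subRL ?H' //; apply: leq_trans (leq_addr _ _) H'.
    by case: ifP => _; rewrite ent_out // Hi2.
  have -> : (j < n1)%N = false by apply/negbTE; rewrite -leqNgt; exact: leq_trans (leq_addr _ _) H'.
  have Hj2 : (j - n1 < n2)%N = false.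
    by apply/negbTE; rewrite -leqNgt leq_subRL ?H' //; apply: leq_trans (leq_addr _ _) H'.
  by case: ifP => _; rewrite ent_out // Hj2 andbF.
case/andP: H => Hi Hj.
have -> : ent (block_mx A B C D) i j = block_mx A B C D (Ordinal Hi) (Ordinal Hj) by rewrite -ent_ord.
case: (splitP (Ordinal Hi)) => [i1 /= Ei|i1 /= Ei];
  case: (splitP (Ordinal Hj)) => [j1 /= Ej|j1 /= Ej].
- rewrite (_ : Ordinal Hi = lshift m2 i1); last by apply: val_inj.
  rewrite (_ : Ordinal Hj = lshift n2 j1); last by apply: val_inj.
  by rewrite block_mxEul Ei Ej ent_ord.
- rewrite (_ : Ordinal Hi = lshift m2 i1); last by apply: val_inj.
  rewrite (_ : Ordinal Hj = rshift n1 j1); last by apply: val_inj.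
  by rewrite block_mxEur Ei Ej addKn ent_ord.
- rewrite (_ : Ordinal Hi = rshift m1 i1); last by apply: val_inj.
  rewrite (_ : Ordinal Hj = lshift n2 j1); last by apply: val_inj.
  by rewrite block_mxEdl Ei Ej addKn ent_ord.
- rewrite (_ : Ordinal Hi = rshift m1 i1); last by apply: val_inj.
  rewrite (_ : Ordinal Hj = rshift n1 j1); last by apply: val_inj.
  by rewrite block_mxEdr Ei Ej !addKn ent_ord.
Qed.



Lemma ent_col m1 m2 n (A : 'M[R]_(m1, n)) (B : 'M[R]_(m2, n)) i j :
  ent (col_mx A B) i j = if (i < m1)%N then ent A i j else ent B (i - m1) j.
Proof.
case H: ((i < m1 + m2)%N && (j < n)%N); last first.
  rewrite ent_out ?H //; case/nandP: (negbT H); rewrite -leqNgt => H'.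
    have -> : (i < m1)%N = false by apply/negbTE; rewrite -leqNgt; exact: leq_trans (leq_addr _ _) H'.
    have Hi2 : (i - m1 < m2)%N = false.
      by apply/negbTE; rewrite -leqNgt leq_subRL ?H' //; apply: leq_trans (leq_addr _ _) H'.
    by rewrite ent_out // Hi2.
  have Hj2 : (j < n)%N = false by apply/negbTE; rewrite -leqNgt.
  by case: ifP => _; rewrite ent_out // Hj2 andbF.
case/andP: H => Hi Hj.
have -> : ent (col_mx A B) i j = col_mx A B (Ordinal Hi) (Ordinal Hj) by rewrite -ent_ord.
case: (splitP (Ordinal Hi)) => [i1 /= Ei|i1 /= Ei].
- rewrite (_ : Ordinal Hi = lshift m2 i1); last by apply: val_inj.
  by rewrite col_mxEu Ei -[j]/(nat_of_ord (Ordinal Hj)) ent_ord.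
- rewrite (_ : Ordinal Hi = rshift m1 i1); last by apply: val_inj.
  by rewrite col_mxEd Ei addKn -[j]/(nat_of_ord (Ordinal Hj)) ent_ord.
Qed.

Lemma ent_dmul r c c' d (A : 'M[R]_(r, c)) (B : 'M[R]_(c', d)) i j :
  ent (dmul A B) i j = if c' == c then \sum_(k < c) ent A i k * ent B k j else 0.
Proof.
rewrite /dmul; case: eqP => e.
  by rewrite entM; apply: eq_bigr => k _; rewrite ent_cast.
by rewrite ent0.
Qed.

Lemma ent_aff (l : layer R) m (v : 'cV[R]_m) i j :
  ent (aff l v) i j = if m == lin l then \sum_(k < lin l) ent (lW l) i k * ent v k j + ent (lB l) i j else 0.
Proof.
rewrite /aff; case: eqP => e.
  by rewrite entD entM; congr (_ + _); apply: eq_bigr => k _; rewrite ent_cast.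
by rewrite ent0.
Qed.

Lemma vhead_ent n (v : 'cV[R]_n) : vhead (existT _ n v) = ent v 0 0.
Proof. by case: n v => [|n] v /=; [rewrite ent_out | rewrite -(ent_ord v ord0 ord0)]. Qed.

Lemma realize2 (a : R -> R) (l1 l2 : layer R) x n (W1 B1 W2 : nat -> R) (b2 : R) :
  a 0 = 0 -> lin l1 = 1%N -> lout l1 = n -> lin l2 = n ->
  (forall k, (k < n)%N -> ent (lW l1) k 0 = W1 k) ->
  (forall k, (k < n)%N -> ent (lB l1) k 0 = B1 k) ->
  (forall k, (k < n)%N -> ent (lW l2) 0 k = W2 k) -> ent (lB l2) 0 0 = b2 ->
  realize1 a [:: l1; l2] x = \sum_(k < n) W2 k * a (W1 k * x + B1 k) + b2.
Proof.
case: l1 => o1 i1 Wa Ba; case: l2 => o2 i2 Wb Bb /= a0 Hi1 Ho1 Hi2 HW1 HB1 HW2 HB2.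
subst i1 o1 i2.
rewrite /realize1. have -> : realize_rec a [:: Layer n 1 Wa Ba; Layer o2 n Wb Bb] (const_mx x : 'cV[R]_1) = existT (fun m => 'cV[R]_m) o2 (aff (Layer o2 n Wb Bb) (map_mx a (aff (Layer n 1 Wa Ba) (const_mx x : 'cV[R]_1)))). reflexivity. rewrite vhead_ent (ent_aff (Layer o2 n Wb Bb)) eqxx HB2; congr (_ + _).
apply: eq_bigr => k _; rewrite HW2 // ent_map //; congr (_ * a _).
rewrite [ent (aff _ _) _ _]ent_aff /= big_ord1 ent_const /= HW1 // HB1 // mulr1.
Qed.

Definition is11 (l : layer R) := (lout l == 1%N) && (lin l == 1%N).

Lemma fold_dims s : all is11 s ->
  lout (foldr (@ldiag R) (ldef R) s) = size s /\ lin (foldr (@ldiag R) (ldef R) s) = size s.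
Proof.
elim: s => [|l s IH] //= /andP[/andP[/eqP Ho /eqP Hi] /IH [H1 H2]].
by rewrite Ho Hi H1 H2.
Qed.

Lemma fold_W s : all is11 s -> forall i j,
  ent (lW (foldr (@ldiag R) (ldef R) s)) i j =
  if (i == j) && (i < size s)%N then ent (lW (nth (ldef R) s i)) 0 0 else 0.
Proof.
elim: s => [|l s IH] /=; first by move=> _ i j; rewrite ent0 andbF.
case/andP=> /andP[/eqP Ho /eqP Hi] Hs i j; rewrite ent_block.
have h0 : (0 < lout l)%N by rewrite Ho.
have h0' : (0 < lin l)%N by rewrite Hi.
have h1 : forall t, (t.+1 < lin l)%N = false by move=> t; rewrite Hi.
have h2 : forall t, (t.+1 < lout l)%N = false by move=> t; rewrite Ho.
have h3 : forall t, (t.+1 - lin l)%N = t by move=> t; rewrite Hi subSS subn0.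
have h4 : forall t, (t.+1 - lout l)%N = t by move=> t; rewrite Ho subSS subn0.
case: i => [|i]; case: j => [|j]; rewrite ?h0 ?h0' ?h1 ?h2 ?ent0 //.
by rewrite h3 h4 IH.
Qed.

Lemma fold_B s : all is11 s -> forall i,
  ent (lB (foldr (@ldiag R) (ldef R) s)) i 0 =
  if (i < size s)%N then ent (lB (nth (ldef R) s i)) 0 0 else 0.
Proof.
elim: s => [|l s IH] /=; first by move=> _ i; rewrite ent0.
case/andP=> /andP[/eqP Ho /eqP Hi] Hs i; rewrite ent_col.
have h2 : forall t, (t.+1 < lout l)%N = false by move=> t; rewrite Ho.
have h4 : forall t, (t.+1 - lout l)%N = t by move=> t; rewrite Ho subSS subn0.
have h0 : (0 < lout l)%N by rewrite Ho.
case: i => [|i]; first by rewrite h0.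
by rewrite h2 h4 IH.
Qed.

Lemma sum_ord1 (F : nat -> R) : \sum_(k < 1) F k = F 0%N.
Proof. by rewrite big_ord1. Qed.

Variables (f : R -> R) (b : R) (K : nat).
Definition Phi k := scal (coefc f b K k) (Defs.comp (idnet R 1) (affA1 1 (- gridx b K k))).
Definition Ps := [seq Phi k | k <- iota 0 K.+1].
Definition L0 := foldr (@ldiag R) (ldef R) [seq nth (ldef R) P 0 | P <- Ps].
Definition L1 := foldr (@ldiag R) (ldef R) [seq nth (ldef R) P 1 | P <- Ps].
Definition Tl := Layer (K.+1 * 1) 1 (\matrix_(i < K.+1 * 1, j < 1) (((i %% 1)%N == j)%:R) : 'M[R]_(K.+1 * 1, 1)) 0.
Definition Sl := Layer 1 (K.+1 * 1) (\matrix_(i < 1, j < K.+1 * 1) (((j %% 1)%N == i)%:R) : 'M[R]_(1, K.+1 * 1)) 0.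
Definition Al := Layer 1 1 (1%:M : 'M[R]_1) ((f (gridx b K 0))%:M : 'cV[R]_1).
Lemma Fnet_eq : Fnet f b K = [:: Defs.merge L0 Tl; Defs.merge Al (Defs.merge Sl L1)].
Proof. rewrite /Fnet /dsum subn0 addn1. reflexivity. Qed.


Definition s0 := [seq nth (ldef R) P 0 | P <- Ps].
Definition s1 := [seq nth (ldef R) P 1 | P <- Ps].

Lemma all_map_is11 (g : nat -> layer R) s : (forall k, is11 (g k)) -> all is11 (map g s).
Proof. by move=> H; elim: s => //= k s ->; rewrite H. Qed.

Lemma all0 : all is11 s0.
Proof. by rewrite /s0 /s1 /Ps -map_comp; apply: all_map_is11. Qed.
Lemma all1 : all is11 s1.
Proof. by rewrite /s0 /s1 /Ps -map_comp; apply: all_map_is11. Qed.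
Lemma size0 : size s0 = K.+1.
Proof. by rewrite /s0 /Ps !size_map size_iota. Qed.
Lemma size1 : size s1 = K.+1.
Proof. by rewrite /s1 /Ps !size_map size_iota. Qed.
Lemma nth0 k : (k < K.+1)%N -> nth (ldef R) s0 k = nth (ldef R) (Phi k) 0.
Proof. by move=> Hk; rewrite /s0 /Ps (nth_map [::]) ?(nth_map 0%N) ?size_map ?size_iota // nth_iota. Qed.
Lemma nth1 k : (k < K.+1)%N -> nth (ldef R) s1 k = nth (ldef R) (Phi k) 1.
Proof. by move=> Hk; rewrite /s1 /Ps (nth_map [::]) ?(nth_map 0%N) ?size_map ?size_iota // nth_iota. Qed.

Lemma Phi0W k : ent (lW (nth (ldef R) (Phi k) 0)) 0 0 = 1.
Proof. by rewrite /= ent_dmul /= big_ord1 !ent_scalar mulr1. Qed.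
Lemma Phi0B k : ent (lB (nth (ldef R) (Phi k) 0)) 0 0 = - gridx b K k.
Proof. by rewrite /= entD ent_dmul /= big_ord1 !ent_scalar mul1r ent0 addr0. Qed.
Lemma Phi1W k : ent (lW (nth (ldef R) (Phi k) 1)) 0 0 = coefc f b K k.
Proof. by rewrite /= ent_dmul /= big_ord1 !ent_scalar mulr1. Qed.
Lemma Phi1B k : ent (lB (nth (ldef R) (Phi k) 1)) 0 0 = 0.
Proof. by rewrite /= entD ent_dmul /= big_ord1 !ent0 mulr0 addr0. Qed.



Lemma L0dims : lout L0 = K.+1 /\ lin L0 = K.+1.
Proof. by rewrite /L0 -/s0 -size0; apply: fold_dims; exact: all0. Qed.
Lemma L1dims : lout L1 = K.+1 /\ lin L1 = K.+1.
Proof. by rewrite /L1 -/s1 -size1; apply: fold_dims; exact: all1. Qed.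

Lemma L0W i j : ent (lW L0) i j = if (i == j) && (i < K.+1)%N then 1 else 0.
Proof.
have := @fold_W s0 all0 i j; rewrite size0 => ->.
by case: ifP => // /andP[_ Hi]; rewrite nth0 // Phi0W.
Qed.
Lemma L1W i j : ent (lW L1) i j = if (i == j) && (i < K.+1)%N then coefc f b K i else 0.
Proof.
have := @fold_W s1 all1 i j; rewrite size1 => ->.
by case: ifP => // /andP[_ Hi]; rewrite nth1 // Phi1W.
Qed.
Lemma L0B i : ent (lB L0) i 0 = if (i < K.+1)%N then - gridx b K i else 0.
Proof.
have := @fold_B s0 all0 i; rewrite size0 => ->.
by case: ifP => // Hi; rewrite nth0 // Phi0B.
Qed.
Lemma L1B i : ent (lB L1) i 0 = 0.
Proof.
have := @fold_B s1 all1 i; rewrite size1 => ->.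
by case: ifP => // Hi; rewrite nth1 // Phi1B.
Qed.

Lemma realF x : realize1 (@relu R) (Fnet f b K) x =
  \sum_(k < K.+1) coefc f b K k * relu (1 * x + - gridx b K k) + f (gridx b K 0).
Proof.
rewrite Fnet_eq; apply: (@realize2 _ _ _ x K.+1 (fun _ => 1) (fun k => - gridx b K k) (coefc f b K) (f (gridx b K 0))).
- by rewrite /relu maxxx.
- by [].
- exact: L0dims.1.
- exact: L1dims.2.
- move=> k Hk; change (ent (dmul (lW L0) (lW Tl)) k 0 = 1); rewrite ent_dmul.
  have -> : (lout Tl == lin L0)%N = true by rewrite L0dims.2 /= muln1 eqxx.
  have Hk' : (k < lin L0)%N by rewrite L0dims.2.
  rewrite (bigD1 (Ordinal Hk')) //= big1 ?addr0.
    rewrite L0W eqxx Hk /= mul1r.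
    by rewrite (ent_gen (F := fun i j => ((i %% 1)%N == j)%:R)) => [|? ?]; rewrite ?mxE // muln1 Hk modn1.
  move=> j Hj; rewrite L0W.
  have -> : (k == j) = false by apply/negbTE; rewrite eq_sym; exact: Hj.
  by rewrite mul0r.
- move=> k Hk; change (ent (dmul (lW L0) (lB Tl) + lB L0) k 0 = - gridx b K k).
  by rewrite entD ent_dmul big1 ?L0B ?Hk; [case: ifP; rewrite add0r | move=> j _; rewrite ent0 mulr0].
- move=> k Hk; change (ent (dmul (lW Al) (dmul (lW Sl) (lW L1))) 0 k = coefc f b K k).
  rewrite ent_dmul /= big_ord1 ent_scalar mul1r ent_dmul.
  have -> : (lout L1 == lin Sl)%N = true by rewrite L1dims.1 /= muln1 eqxx.
  have Hk' : (k < lin Sl)%N by rewrite /= muln1.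
  rewrite (bigD1 (Ordinal Hk')) //= big1 ?addr0.
    rewrite L1W eqxx Hk /=.
    by rewrite (ent_gen (F := fun i j => ((j %% 1)%N == i)%:R)) => [|? ?]; rewrite ?mxE // muln1 Hk modn1 mul1r.
  move=> j Hj; rewrite L1W.
  have -> : (nat_of_ord j == k) = false by apply/negbTE; exact: Hj.
  by rewrite mulr0.
- change (ent (dmul (lW Al) (dmul (lW Sl) (lB L1) + lB Sl) + lB Al) 0 0 = f (gridx b K 0)).
  rewrite entD ent_dmul big_ord1 (_ : (lout Sl == lin Al) = true) //.
  rewrite -[ent (lW Al) 0 ord0]/(ent (1%:M : 'M[R]_1) 0 0) ent_scalar mul1r.
  rewrite -[ent (lB Al) 0 0]/(ent ((f (gridx b K 0))%:M : 'M[R]_1) 0 0) ent_scalar.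
  rewrite entD ent0 addr0 ent_dmul big1; first by case: ifP; rewrite add0r.
  by move=> j _; rewrite L1B mulr0.
Qed.



Lemma annD1F : annD1 (Fnet f b K) = K.+1.
Proof. rewrite Fnet_eq; exact: L0dims.1. Qed.

Lemma annPF : annP (Fnet f b K) = (3 * K.+1 + 1)%N.
Proof.
rewrite Fnet_eq /annP !big_cons big_nil.
change ((lout L0 * (1 + 1) + (1 * (lin L1 + 1) + 0))%N = (3 * K.+1 + 1)%N).
rewrite L0dims.1 L1dims.2; lia.
Qed.

End Ent.


Section Math.
Variable R : realType.

Lemma relu_cases (t : R) : (relu t = t /\ 0 <= t) \/ (relu t = 0 /\ t <= 0).
Proof.
rewrite /relu /Num.max; case: (ltP t 0) => H; last by left.
by right; split => //; exact: ltW.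
Qed.

Ltac relu_split := repeat match goal with |- context[@relu R ?t] =>
  case: (relu_cases t) => [[-> ?]|[-> ?]] end.

Lemma abel n (a rr : nat -> R) :
  \sum_(k < n.+1) (a k - (if (k : nat) is k'.+1 then a k' else 0)) * rr k =
  \sum_(j < n) a j * (rr j - rr j.+1) + a n * rr n.
Proof.
elim: n => [|n IH]; first by rewrite big_ord1 big_ord0 subr0 add0r.
rewrite big_ord_recr /= IH big_ord_recr /=; ring.
Qed.

Lemma tele n (u : nat -> R) : \sum_(j < n) (u j - u j.+1) = u 0%N - u n.
Proof.
elim: n => [|n IH]; first by rewrite big_ord0 subrr.
by rewrite big_ord_recr /= IH; ring.
Qed.

Variables (f : R -> R) (b : R) (K : nat).

Definition hh := 2 * b / K%:R.
Definition Df j := f (gridx b K (minn j.+1 K)) - f (gridx b K j).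
Definition rr j x := @relu R (1 * x + - gridx b K j).
Definition G x := \sum_(j < K) (Df j / hh) * (rr j x - rr j.+1 x) + f (gridx b K 0).

Lemma gridxE k : gridx b K k = - b + k%:R * hh.
Proof. by rewrite /gridx /hh !mulrA [_ * 2]mulrC. Qed.

Lemma gridxS k : gridx b K k.+1 = gridx b K k + hh.
Proof. rewrite !gridxE -addn1 natrD; ring. Qed.

Lemma coefcE (hb : 0 < b) (hK : (0 < K)%N) k : (k <= K)%N ->
  coefc f b K k = Df k / hh - (if k is k'.+1 then Df k' / hh else 0).
Proof.
have b0 : b != 0 by rewrite gt_eqF.
have K0 : K%:R != 0 :> R by rewrite pnatr_eq0 -lt0n.
rewrite /coefc /Df /hh; case: k => [|k] Hk /=.
  by rewrite subr0; field; rewrite K0 b0.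
rewrite (minn_idPl Hk); field; by rewrite K0 b0.
Qed.


Lemma tele' n (u : nat -> R) : \sum_(j < n) (u j.+1 - u j) = u n - u 0%N.
Proof.
elim: n => [|n IH]; first by rewrite big_ord0 subrr.
by rewrite big_ord_recr /= IH; ring.
Qed.

Lemma RF_G (hb : 0 < b) (hK : (0 < K)%N) x : realize1 (@relu R) (Fnet f b K) x = G x.
Proof.
rewrite realF /G; congr (_ + _).
transitivity (\sum_(k < K.+1) (Df k / hh - (if (k : nat) is k'.+1 then Df k' / hh else 0)) * rr k x).
  by apply: eq_bigr => k _; rewrite coefcE // -ltnS.
have := abel K (fun k => Df k / hh) (fun k => rr k x); rewrite /= => ->.
have -> : Df K = 0 by rewrite /Df (minn_idPr (leqnSn K)) subrr.
by rewrite mul0r mul0r addr0.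
Qed.

Lemma hh_gt0 (hb : 0 < b) (hK : (0 < K)%N) : 0 < hh.
Proof. by rewrite /hh divr_gt0 ?mulr_gt0 ?ltr0n. Qed.

Lemma gridx_le i k : 0 <= hh -> (i <= k)%N -> gridx b K i <= gridx b K k.
Proof. by move=> h0 Hik; rewrite !gridxE lerD2l ler_wpM2r // ler_nat. Qed.

Lemma gridx0 : gridx b K 0 = - b.
Proof. by rewrite gridxE mul0r addr0. Qed.

Lemma gridxK (hK : (0 < K)%N) : gridx b K K = b.
Proof.
have K0 : K%:R != 0 :> R by rewrite pnatr_eq0 -lt0n.
rewrite gridxE /hh; field; exact: K0.
Qed.


Lemma cl_mono (hb : 0 < b) (hK : (0 < K)%N) j x y : x <= y ->
  rr j x - rr j.+1 x <= rr j y - rr j.+1 y.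
Proof.
move=> Hxy; have h0 := hh_gt0 hb hK.
rewrite /rr gridxS; relu_split; lra.
Qed.

Lemma cl_full (hb : 0 < b) (hK : (0 < K)%N) j x : gridx b K j.+1 <= x -> rr j x - rr j.+1 x = hh.
Proof. move=> H; have h0 := hh_gt0 hb hK; move: H; rewrite /rr gridxS => H; relu_split; lra. Qed.

Lemma cl_zero (hb : 0 < b) (hK : (0 < K)%N) j x : x <= gridx b K j -> rr j x - rr j.+1 x = 0.
Proof. move=> H; have h0 := hh_gt0 hb hK; move: H; rewrite /rr gridxS => H; relu_split; lra. Qed.

Lemma Df_bound (L : R) (hf : forall x y : R, `|f x - f y| <= L * `|x - y|)
  (hb : 0 < b) (hK : (0 < K)%N) j : (j < K)%N -> `|Df j| <= L * hh.
Proof.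
move=> Hj; rewrite /Df (minn_idPl Hj).
have := hf (gridx b K j.+1) (gridx b K j); rewrite gridxS.
have -> : gridx b K j + hh - gridx b K j = hh by ring.
by rewrite (gtr0_norm (hh_gt0 hb hK)).
Qed.

Lemma G_lip (L : R) (hL : 0 <= L) (hf : forall x y : R, `|f x - f y| <= L * `|x - y|)
  (hb : 0 < b) (hK : (0 < K)%N) x y : `|G x - G y| <= L * `|x - y|.
Proof.
wlog Hxy : x y / x <= y.
  move=> W; case: (leP x y) => [/W //|/ltW /W].
  by rewrite distrC [`|y - x|]distrC.
have h0 := hh_gt0 hb hK.
have Hd : 0 <= y - x by rewrite subr_ge0.
rewrite distrC [`|x - y|]distrC (ger0_norm Hd) /G.
have -> : forall a c d : R, (a + c) - (d + c) = a - d by move=> *; ring.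
rewrite -sumrB.
apply: (le_trans (ler_norm_sum _ _ _)).
apply: (@le_trans _ _ (\sum_(j < K) L * ((rr j y - rr j.+1 y) - (rr j x - rr j.+1 x)))).
  apply: ler_sum => j _.
  have Hc : 0 <= (rr j y - rr j.+1 y) - (rr j x - rr j.+1 x) by rewrite subr_ge0 cl_mono.
  rewrite -mulrBr normrM (ger0_norm Hc).
  apply: ler_wpM2r => //.
  rewrite normrM [`|hh^-1|]ger0_norm ?invr_ge0 ?(ltW h0) // ler_pdivrMr //; exact: Df_bound.
have T1 := tele K (fun j => rr j y); have T2 := tele K (fun j => rr j x); simpl in T1, T2.
rewrite -mulr_sumr ler_wpM2l // sumrB T1 T2.
have := cl_mono hb hK 0 Hxy.
rewrite /rr; relu_split; lra.
Qed.


Lemma G_node (hb : 0 < b) (hK : (0 < K)%N) m : (m <= K)%N -> G (gridx b K m) = f (gridx b K m).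
Proof.
move=> Hm; have h0 := hh_gt0 hb hK.
rewrite /G (eq_bigr (fun j : 'I_K => if (j < m)%N then Df j else 0)); last first.
  move=> j _; case: ifP => Hj.
    by rewrite cl_full // ?gridx_le ?ltW // mulfVK // gt_eqF.
  by rewrite cl_zero ?mulr0 // gridx_le ?ltW // leqNgt Hj.
rewrite -big_mkcond /= -(big_ord_widen _ (fun j => Df j) Hm).
rewrite (eq_bigr (fun j : 'I_m => f (gridx b K j.+1) - f (gridx b K j))); last first.
  by move=> j _; rewrite /Df (minn_idPl (leq_trans (ltn_ord j) Hm)).
have T := tele' m (fun j => f (gridx b K j)); simpl in T; rewrite T; ring.
Qed.

Lemma near_node (hb : 0 < b) (hK : (0 < K)%N) x n : gridx b K 0 <= x -> x <= gridx b K n + hh / 2 ->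
  exists m, (m <= n)%N /\ `|x - gridx b K m| <= hh / 2.
Proof.
have h0 := hh_gt0 hb hK.
move=> H0; elim: n => [|n IH] Hn.
  by exists 0%N; split => //; rewrite ger0_norm ?subr_ge0 // lerBlDl.
case: (leP x (gridx b K n + hh / 2)) => H.
  by case: (IH H) => m [Hm Hm']; exists m; split => //; apply: leq_trans Hm _.
exists n.+1; split => //; move: Hn H; rewrite gridxS => Hn H.
rewrite ler_norml; apply/andP; split; lra.
Qed.

Lemma G_err (L : R) (hL : 0 <= L) (hf : forall x y : R, `|f x - f y| <= L * `|x - y|)
  (hb : 0 < b) (hK : (0 < K)%N) x : - b <= x <= b -> `|G x - f x| <= L * hh.
Proof.
case/andP => H1 H2; have h0 := hh_gt0 hb hK.
have [m [Hm Hx]] : exists m, (m <= K)%N /\ `|x - gridx b K m| <= hh / 2.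
  apply: near_node => //; first by rewrite gridx0.
  by rewrite gridxK //; lra.
apply: (le_trans (ler_distD (G (gridx b K m)) _ _)).
have A1 := G_lip hL hf hb hK x (gridx b K m).
have A2 := hf (gridx b K m) x.
rewrite G_node // in A1 *.
rewrite [`|gridx b K m - x|]distrC in A2.
have : L * `|x - gridx b K m| <= L * (hh / 2) by rewrite ler_wpM2l.
lra.
Qed.

Lemma G_out_r (L : R) (hL : 0 <= L) (hf : forall x y : R, `|f x - f y| <= L * `|x - y|)
  (hb : 0 < b) (hK : (0 < K)%N) x : b <= x -> `|G x - f x| <= 2 * L * (x - b).
Proof.
move=> H; apply: (le_trans (ler_distD (G (gridx b K K)) _ _)).
have Gb := G_node hb hK (leqnn K); rewrite gridxK // in Gb.
rewrite gridxK // Gb.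
have A1 := G_lip hL hf hb hK x b.
have A2 := hf b x.
rewrite Gb in A1; rewrite [`|b - x|]distrC in A2.
rewrite [`|x - b|]ger0_norm ?subr_ge0 // in A1 A2.
lra.
Qed.

Lemma G_out_l (L : R) (hL : 0 <= L) (hf : forall x y : R, `|f x - f y| <= L * `|x - y|)
  (hb : 0 < b) (hK : (0 < K)%N) x : x <= - b -> `|G x - f x| <= 2 * L * (- b - x).
Proof.
move=> H; apply: (le_trans (ler_distD (G (gridx b K 0)) _ _)).
have Gb := G_node hb hK (leq0n K); rewrite gridx0 in Gb.
rewrite gridx0 Gb.
have A1 := G_lip hL hf hb hK x (- b).
have A2 := hf (- b) x.
rewrite Gb in A1; rewrite [`|x - - b|]ler0_norm ?subr_le0 // in A1.
rewrite [`|- b - x|]ger0_norm ?subr_ge0 // in A2.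
lra.
Qed.

End Math.


Lemma maxR_ge (R : realType) (a c : R) : a <= Num.max a c /\ c <= Num.max a c.
Proof. rewrite /Num.max; case: (ltP a c) => H; split; lra. Qed.

Arguments maxR_ge {R}.
Local Open Scope classical_set_scope.

Theorem mainTheorem16 (R : realType) (eps L q b : R) (K : nat) (f : R -> R) :
  0 < eps -> eps <= 1 -> 0 <= L -> 1 < q -> 1 <= b ->
  Num.max 1 (2 * L) = eps * b `^ (q - 1) ->
  (0 < K)%N -> 2 * L * b / eps <= K%:R -> K%:R <= 2 * L * b / eps + 1 ->
  (forall x y : R, `|f x - f y| <= L * `|x - y|) ->
  let F := Fnet f b K in
  let RF := realize1 (@relu R) F in
  [/\ (forall x y : R, `|RF x - RF y| <= L * `|x - y|),
      (ereal_sup [set (`|RF x - f x|)%:E | x in `[(- b)%R, b%R]] <= (2 * L * b / K%:R)%:E)%E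
        /\ 2 * L * b / K%:R <= eps,
      (forall x : R, `|RF x - f x| <= eps * Num.max 1 (`|x| `^ q)),
      (annD1 F)%:R <= 2 * (Num.max 1 (2 * L)) `^ (q / (q - 1)) * eps `^ (- (q / (q - 1))) + 1
    & annP F = (3 * annD1 F + 1)%N /\
      (annP F)%:R <= 12 * (Num.max 1 (2 * L)) `^ (q / (q - 1)) * eps `^ (- (q / (q - 1)))].
Proof.
move=> he0 he1 hL hq hb hM hK hK1 hK2 hf F RF.
have b0 : 0 < b by apply: lt_le_trans hb.
have RFG : forall x, RF x = G f b K x by move=> x; exact: RF_G.
have EhhL : L * hh b K = 2 * L * b / K%:R by rewrite /hh !mulrA [L * 2]mulrC.
have Kpos : (0 : R) < K%:R by rewrite ltr0n.
have Hbound : 2 * L * b / K%:R <= eps.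
  rewrite ler_pdivrMr // [eps * _]mulrC; move: hK1; by rewrite ler_pdivrMr.
have [HM1 HM2] := maxR_ge 1 (2 * L).
set B1 := b `^ (q - 1) in hM.
have hq1 : 0 <= q - 1 by lra.
have B1ge : 1 <= B1.
  have := @ge0_ler_powR R (q - 1) hq1 1 b.
  by rewrite powR1 /=; apply; rewrite ?nnegrE //; lra.
have Bq : b `^ q = b * B1 by rewrite mulr_powRB1 //; lra.
have key : forall t, b <= t -> 2 * L * t <= eps * t `^ q.
  move=> t Ht; rewrite -mulr_powRB1; [|lra|lra].
  have Ht1 : B1 <= t `^ (q - 1).
    apply: (@ge0_ler_powR R (q - 1)); rewrite ?nnegrE //; lra.
  have h1 : 2 * L * t <= eps * B1 * t by apply: ler_wpM2r; [lra | rewrite -hM].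
  have h2 : eps * B1 * t <= eps * t `^ (q - 1) * t.
    by apply: ler_wpM2r; [lra | rewrite ler_wpM2l //; lra].
  apply: (le_trans h1); apply: (le_trans h2); by rewrite -mulrA [_ * t]mulrC.
have Ep : Num.max 1 (2 * L) `^ (q / (q - 1)) * eps `^ (- (q / (q - 1))) = b `^ q.
  rewrite hM powRM ?(ltW he0) ?powR_ge0 // /B1 -powRrM.
  have -> : (q - 1) * (q / (q - 1)) = q.
    by field; rewrite subr_eq0 gt_eqF.
  rewrite powRN mulrAC mulfV ?mul1r //.
  by rewrite gt_eqF // powR_gt0.
have Hq1 : 1 <= b `^ q by rewrite Bq; nra.
have Hx2 : 2 * L * b / eps <= b `^ q.
  rewrite ler_pdivrMr // Bq.
  have HM2p : 2 * L <= eps * B1 by rewrite -hM.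
  have := ler_wpM2r (ltW b0) HM2p.
  lra.
split.
- by move=> x y; rewrite !RFG; apply: G_lip.
- split => //; apply: ge_ereal_sup; move=> _ [x Hx <-].
  rewrite lee_fin RFG -EhhL; apply: G_err => //.
- move=> x; rewrite RFG.
  have [H1 H2] := maxR_ge 1 (`|x| `^ q).
  case: (leP x b) => Hxb; case: (leP (- b) x) => Hbx.
  + apply: (le_trans (G_err hL hf b0 hK _)); first by apply/andP.
    rewrite EhhL; apply: (le_trans Hbound).
    rewrite -{1}(mulr1 eps); apply: ler_wpM2l; [exact: ltW | exact: H1].
  + apply: (le_trans (G_out_l hL hf b0 hK (ltW Hbx))).
    have Hk := key (- x) ltac:(lra).
    rewrite ltr0_norm; last by lra.
    have Hm := maxR_ge 1 ((- x) `^ q).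
    have He : eps * (- x) `^ q <= eps * Num.max 1 ((- x) `^ q).
      by apply: ler_wpM2l; [exact: ltW | exact: Hm.2].
    have Lb : 0 <= L * b by rewrite mulr_ge0 // ltW.
    nra.
  + apply: (le_trans (G_out_r hL hf b0 hK (ltW Hxb))).
    have Hk := key x (ltW Hxb).
    rewrite gtr0_norm; last by lra.
    have Hm := maxR_ge 1 (x `^ q).
    have He : eps * x `^ q <= eps * Num.max 1 (x `^ q).
      by apply: ler_wpM2l; [exact: ltW | exact: Hm.2].
    have Lb : 0 <= L * b by rewrite mulr_ge0 // ltW.
    nra.
  + lra.
- rewrite annD1F -mulrA Ep -addn1 natrD.
  have : K%:R <= b `^ q + 1 by lra.
  lra.
- rewrite annPF annD1F; split => //.
  rewrite -mulrA Ep natrD natrM -addn1 natrD.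
  have : K%:R <= b `^ q + 1 by lra.
  lra.
Qed.
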